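(* Let $\Pi_n$ be a PARITY$_n$ program. Suppose $\Pi_n$ contains a rule $x\leftarrow B$ (with $x$ a variable) such that $not\ not\ x\in B$ and $S(B)=\{J\}$ for a single string $J$ which is even. Then the program $\Pi_n'=\Pi_n\setminus\{x\leftarrow B\}$ satisfies $Ans(\Pi_n')=$ PARITY$_n$.
   Context: A rule element is one of $\top$, $\bot$, $x$, $not\ x$, $not\ not\ x$, where $x$ is a variable. A (canonical) rule is $H\leftarrow B$ with $H$ a variable or $\bot$ and $B$ a finite set of rule elements; a canonical program is a finite set of rules. For a set of variables $I$: $I\models\top$; $I\not\models\bot$; $I\models x$ iff $I\models not\ not\ x$ iff $x\in I$; $I\models not\ x$ iff $x\notin I$; $I\models B$ iff $I$ satisfies every element of $B$; $I$ is closed under $H\leftarrow B$ if $I\models B$ implies $I\models H$. The reduct $\Pi^I$ replaces $not\ not\ x$ by $\top$ if $x\in I$ else $\bot$, and $not\ x$ by $\top$ if $x\notin I$ else $\bot$; $I$ is an answer set of $\Pi$ if $I$ is the least set closed under all rules of $\Pi^I$; $Ans(\Pi)$ is the set of answer sets; $var(\Pi)$ is the set of variables occurring in $\Pi$. Strings $w\in\{0,1\}^n$ are identified with $\{x_i:w_i=1\}$; PARITY$_n$ is the set of strings in $\{0,1\}^n$ with an odd number of 1's (odd strings; the others are even); a PARITY$_n$ program is a canonical program $\Pi$ with $var(\Pi)=\{x_1,\dots,x_n\}$ and $Ans(\Pi)=$ PARITY$_n$. For a set $B$ of rule elements, $S(B)=\{I\subseteq\{x_1,\dots,x_n\}: I\models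 B\}$. *)

(* Defs.v *)
(* Variables x_i are represented by natural numbers i;
   the string variables are x_1, ..., x_n, i.e. the naturals 1..n. *)
From Stdlib Require Import List Arith Bool.
Import ListNotations.

Inductive elem : Type :=
  | ETop : elem
  | EBot : elem
  | EPos : nat -> elem
  | ENeg : nat -> elem
  | ENNeg : nat -> elem.

(* head: Some x is the variable x, None is bottom *)
Record rule : Type := mkRule { head : option nat ; body : list elem }.

Definition program := list rule.

Definition interp := nat -> bool.

Definition sat_elem (I : interp) (e : elem) : Prop :=
  match e with
  | ETop => True
  | EBot => False
  | EPos x => I x = true
  | ENeg x => I x = false
  | ENNeg x => I x = true
  end.

Definition sat_body (I : interp) (B : list elem) : Prop :=
  forall e, In e B -> sat_elem I e.

Definition sat_head (I : interp) (h : option nat) : Prop :=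
  match h with
  | Some x => I x = true
  | None => False
  end.

Definition closed_under (I : interp) (r : rule) : Prop :=
  sat_body I (body r) -> sat_head I (head r).

Definition reduct_elem (I : interp) (e : elem) : elem :=
  match e with
  | ENNeg x => if I x then ETop else EBot
  | ENeg x => if I x then EBot else ETop
  | _ => e
  end.

Definition reduct_rule (I : interp) (r : rule) : rule :=
  mkRule (head r) (map (reduct_elem I) (body r)).

Definition reduct (P : program) (I : interp) : program :=
  map (reduct_rule I) P.

Definition closed_prog (J : interp) (P : program) : Prop :=
  forall r, In r P -> closed_under J r.

Definition subset (I J : interp) : Prop := forall x, I x = true -> J x = true.

Definition answer_set (P : program) (I : interp) : Prop :=
  closed_prog I (reduct P I) /\
  (forall J, closed_prog J (reduct P I) -> subset I J).

Definition elem_var (e : elem) : option nat :=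
  match e with
  | EPos x | ENeg x | ENNeg x => Some x
  | _ => None
  end.

Definition occurs (x : nat) (P : program) : Prop :=
  exists r, In r P /\ (head r = Some x \/ exists e, In e (body r) /\ elem_var e = Some x).

(* strings in {0,1}^n = subsets of {x_1,...,x_n} *)
Definition is_string (n : nat) (I : interp) : Prop :=
  forall x, I x = true -> 1 <= x <= n.

Definition num_ones (n : nat) (I : interp) : nat := count_occ Bool.bool_dec (map I (seq 1 n)) true.

Definition in_PARITY (n : nat) (I : interp) : Prop :=
  is_string n I /\ Nat.odd (num_ones n I) = true.

Definition even_string (n : nat) (I : interp) : Prop :=
  is_string n I /\ Nat.even (num_ones n I) = true.

Definition Ans_is_PARITY (n : nat) (P : program) : Prop :=
  forall I, answer_set P I <-> in_PARITY n I.

Definition parity_program (n : nat) (P : program) : Prop :=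
  (forall x, occurs x P <-> 1 <= x <= n) /\ Ans_is_PARITY n P.

Definition in_S (n : nat) (B : list elem) (I : interp) : Prop :=
  is_string n I /\ sat_body I B.

Definition elem_eq_dec (a b : elem) : {a = b} + {a <> b}.
Proof. decide equality; apply Nat.eq_dec. Defined.

Definition rule_eq_dec (a b : rule) : {a = b} + {a <> b}.
Proof.
  decide equality.
  - apply (list_eq_dec elem_eq_dec).
  - decide equality; apply Nat.eq_dec.
Defined.

Definition remove_rule (r : rule) (P : program) : program :=
  remove rule_eq_dec r P.

(* Main.v *)
Require Import Defs.
From Stdlib Require Import List Arith Bool.

Lemma sat_map K f (B : list elem) :
  sat_body K (map f B) <-> forall e, In e B -> sat_elem K (f e).
Proof.
  unfold sat_body; split.
  - intros H e He. apply H. apply in_map_iff; eauto.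
  - intros H e' He'. apply in_map_iff in He'. destruct He' as [e [<- He]]. auto.
Qed.

Lemma closed_reduct_iff J P I : closed_prog J (reduct P I) <->
  forall r, In r P -> sat_body J (map (reduct_elem I) (Defs.body r)) -> sat_head J (Defs.head r).
Proof.
  unfold closed_prog, reduct; split.
  - intros H r Hr. apply (H (reduct_rule I r)). apply in_map_iff; eauto.
  - intros H r' Hr'. apply in_map_iff in Hr'. destruct Hr' as [r [<- Hr]].
    unfold closed_under; simpl. apply H; auto.
Qed.

Lemma mono_elem K L I e : subset K L -> sat_elem K (reduct_elem I e) -> sat_elem L (reduct_elem I e).
Proof. intros H; destruct e; simpl; auto; destruct (I n); simpl; auto. Qed.

Lemma self_elem K I e : subset K I -> sat_elem K (reduct_elem I e) -> sat_elem I e.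
Proof. intros H; destruct e; simpl; auto; destruct (I n) eqn:E; simpl; auto; intros []. Qed.

Theorem mainTheorem10 (n : nat) (P : program) (x : nat) (B : list elem) :
  parity_program n P ->
  In (mkRule (Some x) B) P ->
  In (ENNeg x) B ->
  (exists J : interp, even_string n J /\
     (forall K : interp, in_S n B K <-> (forall y, K y = J y))) ->
  Ans_is_PARITY n (remove_rule (mkRule (Some x) B) P).
Proof.
  intros [Hocc HP] Hin Hnn [J [[HJs HJe] HS]] I. unfold remove_rule. split.
  - intro HA. apply HP. destruct HA as [Hc Hm]. split.
    + rewrite closed_reduct_iff in *. intros r0 Hr0 Hb.
      destruct (rule_eq_dec r0 (mkRule (Some x) B)) as [->|Hne].
      * simpl in *. pose proof (proj1 (sat_map I (reduct_elem I) B) Hb _ Hnn) as Hb0; clear Hb; rename Hb0 into Hb. simpl in Hb.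
        destruct (I x); [reflexivity|contradiction].
      * apply Hc; [apply in_in_remove; auto| auto].
    + intros J0 HJ0. apply Hm. rewrite closed_reduct_iff in *. intros r0 Hr0.
      apply in_remove in Hr0. apply HJ0; tauto.
  - intro HPar. pose proof HPar as HA. apply HP in HA. destruct HA as [Hc Hm]. split.
    + rewrite closed_reduct_iff in *. intros r0 Hr0. apply in_remove in Hr0. apply Hc; tauto.
    + intros J0 HJ0. set (K := fun y => J0 y && I y).
      assert (HKJ : subset K J0).
      { intros y Hy. unfold K in Hy. apply andb_prop in Hy. tauto. }
      assert (HKI : subset K I).
      { intros y Hy. unfold K in Hy. apply andb_prop in Hy. tauto. }
      assert (Hsub : subset I K).
      { apply Hm. rewrite closed_reduct_iff in *. intros r0 Hr0 Hb.
        assert (Hb1 : sat_body J0 (map (reduct_elem I) (Defs.body r0))).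
        { apply (proj2 (sat_map _ (reduct_elem I) _)). intros e He. apply (mono_elem K); auto. apply (proj1 (sat_map K (reduct_elem I) (Defs.body r0))); auto. }
        assert (Hb2 : sat_body I (map (reduct_elem I) (Defs.body r0))).
        { apply (proj2 (sat_map _ (reduct_elem I) _)). intros e He. apply (mono_elem K); auto. apply (proj1 (sat_map K (reduct_elem I) (Defs.body r0))); auto. }
        destruct (rule_eq_dec r0 (mkRule (Some x) B)) as [->|Hne].
        * exfalso. simpl in Hb.
          assert (HBI : sat_body I B).
          { intros e He. apply (self_elem K); auto. apply (proj1 (sat_map K (reduct_elem I) B)); auto. }
          destruct HPar as [HIs HIo].
          assert (Heq : forall y, I y = J y) by (apply HS; split; auto).
          assert (Hn : num_ones n I = num_ones n J).
          { unfold num_ones. rewrite (map_ext I J); auto. }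
          rewrite Hn in HIo. rewrite <- Nat.negb_even, HJe in HIo. discriminate.
        * specialize (Hc r0 Hr0 Hb2). specialize (HJ0 r0 (in_in_remove _ _ Hne Hr0) Hb1).
          destruct (Defs.head r0); simpl in *; [unfold K; rewrite Hc, HJ0; reflexivity | contradiction]. }
      intros y Hy. apply HKJ. apply Hsub. auto.
Qed.
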